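(* Let $M,N$ be $\lambda\mu$-terms with $\lambda\mu\vdash M=N$. If $\Gamma\vdash M:\delta\mid\Delta$ is derivable in the intersection type assignment system, then $\Gamma\vdash N:\delta\mid\Delta$ is derivable.
   Context: $\lambda\mu$-calculus. Terms and commands: $M::=x\mid\lambda x.M\mid MN\mid\mu\alpha.\mathsf C$ and $\mathsf C::=[\alpha]M$, up to renaming of bound variables and names. Structural substitution $T[\alpha\Leftarrow L]$ replaces, recursively, every subterm $[\alpha]N$ by $[\alpha](N[\alpha\Leftarrow L])L$ and leaves everything else unchanged. $\to_{\beta\mu}$ is the compatible closure of: - $(\lambda x.M)N\to M[N/x]$; - $(\mu\alpha.\mathsf C)N\to\mu\alpha.\mathsf C[\alpha\Leftarrow N]$; - $[\alpha]\mu\beta.\mathsf C\to\mathsf C[\alpha/\beta]$. $\lambda\mu\vdash M=N$ is the equational theory it generates. Types (for a fixed $\omega$-algebraic lattice $R$ with compact elements $\mathcal K(R)$): - $\Lambda_R$: $\rho::=\psi_a\mid\omega\mid\rho\wedge\rho$; - $\Lambda_D$: $\delta::=\rho\mid\kappa\to\rho\mid\omega\mid\delta\wedge\delta$; - $\Lambda_C$: $\kappa::=\delta\times\kappa\mid\omega\mid\kappa\wedge\kappa$. The relations $\le_R,\le_D,\le_C$ are the least reflexive, transitive relations with $\sigma\wedge\tau\le\sigma,\tau$, $\sigma\le\omega$, $\rho\le\sigma,\tau\Rightarrow\rho\le\sigma\wedge\tau$, and additionally: - $\psi_\bot\sim\omega$ and $\psi_{a\sqcup b}\sim\psi_a\wedge\psi_b$;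 - $\le_R\subseteq\le_D$; - $\omega\le_D\omega\to\omega$; - $\psi_a\le_D\omega\to\psi_a\le_D\psi_a$; - $\omega\le_C\omega\times\omega$; - $(\kappa\to\rho_1)\wedge(\kappa\to\rho_2)\le_D\kappa\to(\rho_1\wedge\rho_2)$; - $(\delta_1\times\kappa_1)\wedge(\delta_2\times\kappa_2)\le_C(\delta_1\wedge\delta_2)\times(\kappa_1\wedge\kappa_2)$; - $\to$ is contravariant in $\Lambda_C$ and covariant in $\Lambda_R$; - $\times$ is covariant in both arguments. Type assignment. Bases $\Gamma$ are finite maps from variables to $\Lambda_D$, and contexts $\Delta$ are finite maps from names to $\Lambda_C$. $\Gamma(x)$ and $\Delta(\alpha)$ are $\omega$ outside the domain. The rules are: - (Ax) $\Gamma,x{:}\delta\vdash x:\delta\mid\Delta$. - (Abs) From $\Gamma\vdash M:\kappa\to\rho\mid\Delta$, $\Gamma(x)=\delta$, infer $\Gamma\setminus x\vdash\lambda x.M:(\delta\times\kappa)\to\rho\mid\Delta$. - (App) From $\Gamma\vdash M:(\delta\times\kappa)\to\rho\mid\Delta$ and $\Gamma\vdash N:\delta\mid\Delta$, infer $\Gamma\vdash MN:\kappa\to\rho\mid\Delta$. - (Cmd) From $\Gamma\vdash M:\delta\mid\Delta$, $\Delta(\alpha)=\kappa$, infer $\Gamma\vdash[\alpha]M:\delta\times\kappa\mid\Delta$. - ($\mu$) From $\Gamma\vdash\mathsf C:(\kappa'\to\rho)\times\kappa'\mid\Delta$, $\Delta(\alpha)=\kappa$, infer $\Gamma\vdash\mu\alpha.\mathsf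 C:\kappa\to\rho\mid\Delta\setminus\alpha$. - ($\wedge$) intersection introduction; ($\omega$) every $T$ has type $\omega$; ($\le$) subsumption. Variables in $\Gamma$ and names in $\Delta$ are assumed not bound in the subject. *)

(* Defs.v *)
From HB Require Import structures.
From mathcomp Require Import all_boot order.
From Stdlib Require Import Relations.

Set Implicit Arguments.
Unset Strict Implicit.
Unset Printing Implicit Defensive.

(* lambda-mu terms and commands, de Bruijn indices for both variables *)
(* (bound by Lam) and names (bound by Mu).  This realises terms up to *)
(* renaming of bound variables and names.                             *)

Inductive term : Type :=
| Var : nat -> term
| Lam : term -> term
| App : term -> term -> term
| Mu  : cmd -> term
with cmd : Type :=
| Named : nat -> term -> cmd.   (* Named a M  =  [a]M *)

Definition upren (xi : nat -> nat) : nat -> nat :=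
  fun n => match n with 0 => 0 | S m => S (xi m) end.

Fixpoint ren_v (xi : nat -> nat) (t : term) : term :=
  match t with
  | Var x => Var (xi x)
  | Lam M => Lam (ren_v (upren xi) M)
  | App M N => App (ren_v xi M) (ren_v xi N)
  | Mu c => Mu (ren_v_c xi c)
  end
with ren_v_c (xi : nat -> nat) (c : cmd) : cmd :=
  match c with Named a M => Named a (ren_v xi M) end.

Fixpoint ren_n (xi : nat -> nat) (t : term) : term :=
  match t with
  | Var x => Var x
  | Lam M => Lam (ren_n xi M)
  | App M N => App (ren_n xi M) (ren_n xi N)
  | Mu c => Mu (ren_n_c (upren xi) c)
  end
with ren_n_c (xi : nat -> nat) (c : cmd) : cmd :=
  match c with Named a M => Named (xi a) (ren_n xi M) end.

Definition up_v (sigma : nat -> term) : nat -> term :=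
  fun n => match n with 0 => Var 0 | S m => ren_v S (sigma m) end.

Fixpoint subst_v (sigma : nat -> term) (t : term) : term :=
  match t with
  | Var x => sigma x
  | Lam M => Lam (subst_v (up_v sigma) M)
  | App M N => App (subst_v sigma M) (subst_v sigma N)
  | Mu c => Mu (subst_v_c (fun n => ren_n S (sigma n)) c)
  end
with subst_v_c (sigma : nat -> term) (c : cmd) : cmd :=
  match c with Named a M => Named a (subst_v sigma M) end.

(* M[N/x] for x the outermost bound variable (index 0) *)
Definition beta_subst (M N : term) : term :=
  subst_v (fun n => match n with 0 => N | S m => Var m end) M.

(* structural substitution T[a <= L]: every [a]N becomes [a](N[a<=L])L *)
Fixpoint ssub (a : nat) (L : term) (t : term) : term :=
  match t with
  | Var x => Var x
  | Lam M => Lam (ssub a (ren_v S L) M)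
  | App M N => App (ssub a L M) (ssub a L N)
  | Mu c => Mu (ssub_c (S a) (ren_n S L) c)
  end
with ssub_c (a : nat) (L : term) (c : cmd) : cmd :=
  match c with
  | Named b M =>
      if Nat.eqb b a then Named b (App (ssub a L M) L)
      else Named b (ssub a L M)
  end.

(* C[a/b] where b is the name bound by the enclosing Mu (index 0) *)
Definition name_subst (a : nat) (c : cmd) : cmd :=
  ren_n_c (fun i => match i with 0 => a | S j => j end) c.

Inductive step : term -> term -> Prop :=
| st_beta M N : step (App (Lam M) N) (beta_subst M N)
| st_mu c N : step (App (Mu c) N) (Mu (ssub_c 0 (ren_n S N) c))
| st_lam M M' : step M M' -> step (Lam M) (Lam M')
| st_appl M M' N : step M M' -> step (App M N) (App M' N)
| st_appr M N N' : step N N' -> step (App M N) (App M N')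
| st_mucong c c' : step_c c c' -> step (Mu c) (Mu c')
with step_c : cmd -> cmd -> Prop :=
| stc_ren a c : step_c (Named a (Mu c)) (name_subst a c)
| stc_named a M M' : step M M' -> step_c (Named a M) (Named a M').

Definition lm_eq : term -> term -> Prop := clos_refl_sym_trans term step.

(* Types over the compact elements K = K(R) of an omega-algebraic     *)
(* lattice R, presented as a countable join-semilattice with bottom.  *)
(* One syntax, with sort predicates isR / isD / isC carving out       *)
(* Lambda_R subset Lambda_D, and Lambda_C; omega is shared.            *)

Inductive ty (K : Type) : Type :=
| Psi : K -> ty K
| Om : ty K
| Meet : ty K -> ty K -> ty K
| Arr : ty K -> ty K -> ty K
| Times : ty K -> ty K -> ty K.
Arguments Om {K}.

Fixpoint isR {K} (t : ty K) : bool :=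
  match t with
  | Psi _ => true
  | Om => true
  | Meet s u => isR s && isR u
  | _ => false
  end.

Fixpoint isD {K} (t : ty K) : bool :=
  match t with
  | Psi _ => true
  | Om => true
  | Meet s u => isD s && isD u
  | Arr k r => isC k && isR r
  | Times _ _ => false
  end
with isC {K} (t : ty K) : bool :=
  match t with
  | Om => true
  | Meet s u => isC s && isC u
  | Times d k => isD d && isC k
  | _ => false
  end.

Section Subtyping.
Context {disp : Order.disp_t} {K : bJoinSemilatticeType disp}.

Inductive le_R : ty K -> ty K -> Prop :=
| leR_refl s : isR s -> le_R s s
| leR_trans s t u : le_R s t -> le_R t u -> le_R s u
| leR_meetl s t : isR s -> isR t -> le_R (Meet s t) s
| leR_meetr s t : isR s -> isR t -> le_R (Meet s t) t
| leR_om s : isR s -> le_R s Om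
| leR_glb r s t : le_R r s -> le_R r t -> le_R r (Meet s t)
| leR_bot1 : le_R (Psi (Order.bottom : K)) Om
| leR_bot2 : le_R Om (Psi (Order.bottom : K))
| leR_join1 (a b : K) : le_R (Psi (Order.join a b)) (Meet (Psi a) (Psi b))
| leR_join2 (a b : K) : le_R (Meet (Psi a) (Psi b)) (Psi (Order.join a b)).

Inductive le_D : ty K -> ty K -> Prop :=
| leD_refl s : isD s -> le_D s s
| leD_trans s t u : le_D s t -> le_D t u -> le_D s u
| leD_meetl s t : isD s -> isD t -> le_D (Meet s t) s
| leD_meetr s t : isD s -> isD t -> le_D (Meet s t) t
| leD_om s : isD s -> le_D s Om
| leD_glb r s t : le_D r s -> le_D r t -> le_D r (Meet s t)
| leD_R s t : le_R s t -> le_D s t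
| leD_omarr : le_D Om (Arr Om Om)
| leD_psiarr (a : K) : le_D (Psi a) (Arr Om (Psi a))
| leD_arrpsi (a : K) : le_D (Arr Om (Psi a)) (Psi a)
| leD_arrmeet k r1 r2 : isC k -> isR r1 -> isR r2 ->
    le_D (Meet (Arr k r1) (Arr k r2)) (Arr k (Meet r1 r2))
| leD_arr_contra k k' r : le_C k' k -> isR r -> le_D (Arr k r) (Arr k' r)
| leD_arr_co k r r' : isC k -> le_R r r' -> le_D (Arr k r) (Arr k r')
with le_C : ty K -> ty K -> Prop :=
| leC_refl s : isC s -> le_C s s
| leC_trans s t u : le_C s t -> le_C t u -> le_C s u
| leC_meetl s t : isC s -> isC t -> le_C (Meet s t) s
| leC_meetr s t : isC s -> isC t -> le_C (Meet s t) t
| leC_om s : isC s -> le_C s Om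
| leC_glb r s t : le_C r s -> le_C r t -> le_C r (Meet s t)
| leC_omtimes : le_C Om (Times Om Om)
| leC_timesmeet d1 d2 k1 k2 : isD d1 -> isD d2 -> isC k1 -> isC k2 ->
    le_C (Meet (Times d1 k1) (Times d2 k2)) (Times (Meet d1 d2) (Meet k1 k2))
| leC_times_l d d' k : le_D d d' -> isC k -> le_C (Times d k) (Times d' k)
| leC_times_r d k k' : isD d -> le_C k k' -> le_C (Times d k) (Times d k').

(* Type assignment.  Bases Gamma and contexts Delta are finite lists   *)
(* indexed by de Bruijn index; lookup outside the list yields omega.   *)
Inductive typ : seq (ty K) -> seq (ty K) -> term -> ty K -> Prop :=
| T_Ax G D x : typ G D (Var x) (nth Om G x)
| T_Abs G D M dl k r : isD dl ->
    typ (dl :: G) D M (Arr k r) -> typ G D (Lam M) (Arr (Times dl k) r)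
| T_App G D M N dl k r :
    typ G D M (Arr (Times dl k) r) -> typ G D N dl -> typ G D (App M N) (Arr k r)
| T_Mu G D c k k' r : isC k ->
    typc G (k :: D) c (Times (Arr k' r) k') -> typ G D (Mu c) (Arr k r)
| T_Meet G D M s t : typ G D M s -> typ G D M t -> typ G D M (Meet s t)
| T_Om G D M : typ G D M Om
| T_Sub G D M s t : typ G D M s -> le_D s t -> typ G D M t
with typc : seq (ty K) -> seq (ty K) -> cmd -> ty K -> Prop :=
| T_Cmd G D a M dl : typ G D M dl -> typc G D (Named a M) (Times dl (nth Om D a))
| Tc_Meet G D c s t : typc G D c s -> typc G D c t -> typc G D c (Meet s t)
| Tc_Om G D c : typc G D c Om
| Tc_Sub G D c s t : typc G D c s -> le_C s t -> typc G D c t.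

End Subtyping.

(* Main.v *)
Require Import Defs.
From HB Require Import structures.
From mathcomp Require Import all_boot order.
From Stdlib Require Import Relations.
From Stdlib Require List PeanoNat.
Import Order.LTheory.

Set Implicit Arguments.
Unset Strict Implicit.
Unset Printing Implicit Defensive.

Scheme le_D_mut := Induction for le_D Sort Prop
with le_C_mut := Induction for le_C Sort Prop.
Scheme typ_mut := Induction for typ Sort Prop
with typc_mut := Induction for typc Sort Prop.
Scheme step_mut := Induction for step Sort Prop
with step_c_mut := Induction for step_c Sort Prop.
Scheme term_mut := Induction for term Sort Prop
with cmd_mut := Induction for cmd Sort Prop.

Lemma in_app_or' {A : Type} {l m : list A} {a : A} :
  List.In a (l ++ m) -> List.In a l \/ List.In a m.
Proof. exact: List.in_app_or. Qed.
Lemma in_or_app' {A : Type} {l m : list A} {a : A} :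
  List.In a l \/ List.In a m -> List.In a (l ++ m).
Proof. exact: List.in_or_app. Qed.

Section Proofs.
Context {disp : Order.disp_t} {K : bJoinSemilatticeType disp}.
Local Notation T := (ty K).

Lemma isR_isD (s : T) : isR s -> isD s.
Proof. elim: s => //= s IHs t IHt /andP[/IHs -> /IHt ->]. by []. Qed.

Ltac srt := simpl in *; repeat (match goal with
  | H : is_true (_ && _) |- _ => case/andP: H => ? ?
  | H : _ /\ _ |- _ => destruct H
  | |- is_true (_ && _) => apply/andP; split
  | |- _ /\ _ => split end); auto using isR_isD.

Lemma le_R_sort (s t : T) : le_R s t -> isR s /\ isR t.
Proof. elim=> //=; clear s t; intros; srt. Qed.

Lemma le_DC_sort :
  (forall s t : T, le_D s t -> isD s /\ isD t) /\
  (forall s t : T, le_C s t -> isC s /\ isC t).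
Proof.
split; [apply: (@le_D_mut _ _ (fun s t _ => isD s /\ isD t) (fun s t _ => isC s /\ isC t))
       | apply: (@le_C_mut _ _ (fun s t _ => isD s /\ isD t) (fun s t _ => isC s /\ isC t))];
  intros; try match goal with H : le_R _ _ |- _ => have := le_R_sort H end; intros; srt.
Qed.

Lemma le_D_sort (s t : T) : le_D s t -> isD s /\ isD t.
Proof. exact: (proj1 le_DC_sort). Qed.
Lemma le_C_sort (s t : T) : le_C s t -> isC s /\ isC t.
Proof. exact: (proj2 le_DC_sort). Qed.


Fixpoint val (t : T) : K :=
  match t with
  | Psi a => a
  | Meet s u => Order.join (val s) (val u)
  | _ => Order.bottom
  end.

Lemma le_R_val (s t : T) : le_R s t -> (val t <= val s)%O.
Proof.
elim=> //=; clear s t; intros.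
- exact: le_trans H2 H0.
- exact: leUl.
- exact: leUr.
- by rewrite leUx H0 H2.
Qed.

Lemma le_R_psi (a b : K) : (b <= a)%O -> le_R (Psi a) (Psi b).
Proof.
move=> ba; rewrite -(join_r ba).
apply: leR_trans (leR_join1 _ _) _; exact: leR_meetl.
Qed.

Lemma le_R_meet2 (a b c d : T) : le_R a b -> le_R c d -> le_R (Meet a c) (Meet b d).
Proof.
move=> ab cd; have [? ?] := le_R_sort ab; have [? ?] := le_R_sort cd.
apply: leR_glb; [apply: leR_trans _ ab | apply: leR_trans _ cd];
  [exact: leR_meetl | exact: leR_meetr].
Qed.

Lemma le_R_norm (s : T) : isR s -> le_R s (Psi (val s)) /\ le_R (Psi (val s)) s.
Proof.
elim: s => //=.
- move=> a _; split; exact: leR_refl.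
- split; [exact: leR_bot2 | exact: leR_bot1].
- move=> s IHs t IHt /andP[/IHs [h1 h2] /IHt [h3 h4]]; split.
  + apply: leR_trans (leR_join2 _ _); exact: le_R_meet2.
  + apply: leR_trans (leR_join1 _ _) _; exact: le_R_meet2.
Qed.

Lemma le_R_of_val (s t : T) : isR s -> isR t -> (val t <= val s)%O -> le_R s t.
Proof.
move=> /le_R_norm [h1 _] /le_R_norm [_ h2] v.
apply: leR_trans h1 _; apply: leR_trans _ h2; exact: le_R_psi.
Qed.

Fixpoint hd (t : T) : T :=
  match t with
  | Times d _ => d
  | Meet s u => Meet (hd s) (hd u)
  | _ => Om
  end.
Fixpoint tl (t : T) : T :=
  match t with
  | Times _ k => k
  | Meet s u => Meet (tl s) (tl u)
  | _ => Om
  end.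

Lemma hdtl_sort (s : T) : isC s -> isD (hd s) /\ isC (tl s).
Proof. elim: s => //= [s IHs t IHt | d _ k _] H; srt; by [apply IHs | apply IHt]. Qed.

Lemma le_D_meet2 (a b c d : T) : le_D a b -> le_D c d -> le_D (Meet a c) (Meet b d).
Proof.
move=> ab cd; have [? ?] := le_D_sort ab; have [? ?] := le_D_sort cd.
apply: leD_glb; [apply: leD_trans _ ab | apply: leD_trans _ cd];
  [exact: leD_meetl | exact: leD_meetr].
Qed.

Lemma le_C_meet2 (a b c d : T) : le_C a b -> le_C c d -> le_C (Meet a c) (Meet b d).
Proof.
move=> ab cd; have [? ?] := le_C_sort ab; have [? ?] := le_C_sort cd.
apply: leC_glb; [apply: leC_trans _ ab | apply: leC_trans _ cd];
  [exact: leC_meetl | exact: leC_meetr].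
Qed.

Lemma le_C_hdtl (s t : T) : le_C s t -> le_D (hd s) (hd t) /\ le_C (tl s) (tl t).
Proof.
elim=> {s t} /=.
- move=> s /hdtl_sort [? ?]; split; [exact: leD_refl | exact: leC_refl].
- move=> s t u _ [h1 h2] _ [h3 h4]; split; [exact: leD_trans h1 h3 | exact: leC_trans h2 h4].
- move=> s t /hdtl_sort [? ?] /hdtl_sort [? ?]; split; [exact: leD_meetl | exact: leC_meetl].
- move=> s t /hdtl_sort [? ?] /hdtl_sort [? ?]; split; [exact: leD_meetr | exact: leC_meetr].
- move=> s /hdtl_sort [? ?]; split; [exact: leD_om | exact: leC_om].
- move=> r s t _ [h1 h2] _ [h3 h4]; split; [exact: leD_glb h1 h3 | exact: leC_glb h2 h4].
- split; [exact: leD_refl | exact: leC_refl].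
- move=> d1 d2 k1 k2 ? ? ? ?; split; [apply: leD_refl | apply: leC_refl]; srt.
- move=> d d' k h ?; split=> //; exact: leC_refl.
- move=> d k k' hd' h _; split=> //; exact: leD_refl hd'.
Qed.

Fixpoint nf (t : T) : seq (T * K) :=
  match t with
  | Psi a => [:: (Om, a)]
  | Meet s u => nf s ++ nf u
  | Arr k r => [:: (k, val r)]
  | _ => [::]
  end.

Definition Qgood (Q : T -> K -> Prop) :=
  [/\ (forall k k' a b, Q k' a -> le_C k k' -> (b <= a)%O -> Q k b),
      (forall k, isC k -> Q k Order.bottom) &
      (forall k a b, Q k a -> Q k b -> Q k (Order.join a b))].

Definition PQ (Q : T -> K -> Prop) (t : T) :=
  forall k a, List.In (k, a) (nf t) -> Q k a.

Lemma PQ_meet Q (s t : T) : PQ Q (Meet s t) <-> PQ Q s /\ PQ Q t.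
Proof.
rewrite /PQ /=; split.
- move=> H; split=> k a h; apply: (H k a); apply: in_or_app'; tauto.
- move=> [H1 H2] k a /in_app_or' [h|h]; [exact: H1 h | exact: H2 h].
Qed.

Lemma PQ_arr Q (k r : T) : PQ Q (Arr k r) <-> Q k (val r).
Proof.
rewrite /PQ /=; split.
- move=> H; apply: (H k (val r)); left; reflexivity.
- by move=> H k' a [[<- <-]|[]].
Qed.

Lemma PQ_R Q (s : T) : Qgood Q -> isR s -> PQ Q s -> Q Om (val s).
Proof.
case=> _ Qb Qj; elim: s => //=.
- move=> a _ H; apply: (H Om a); left; reflexivity.
- move=> _ _; exact: Qb.
- move=> s IHs t IHt /andP[hs ht] /PQ_meet [H1 H2]; apply: Qj; auto.
Qed.

Lemma R_nf (t k : T) a : isR t -> List.In (k, a) (nf t) -> k = Om /\ (a <= val t)%O.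
Proof.
elim: t => //=.
- by move=> b _ [[<- <-]|[]].
- move=> s IHs t IHt /andP[hs ht] /in_app_or' [/(IHs hs)|/(IHt ht)] [-> h];
    split=> //; apply: le_trans h _; [exact: leUl | exact: leUr].
Qed.

Lemma PQ_le Q (s t : T) : Qgood Q -> le_D s t -> PQ Q s -> PQ Q t.
Proof.
move=> QG; have [Qm Qb Qj] := QG; move=> H; elim: H => {s t}.
- by [].
- move=> s t u _ H1 _ H2 h; exact: H2 (H1 h).
- by move=> s t _ _ /PQ_meet [].
- by move=> s t _ _ /PQ_meet [].
- by move=> s _ _ k a [].
- move=> r s t _ H1 _ H2 h; apply/PQ_meet; split; auto.
- move=> s t h Hs k a Ha.
  have [rs rt] := le_R_sort h.
  have [-> hat] := R_nf rt Ha.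
  apply: (Qm _ _ _ _ (PQ_R QG rs Hs)); first exact: leC_refl.
  exact: le_trans hat (le_R_val h).
- move=> _; apply/PQ_arr; exact: Qb.
- by [].
- by [].
- move=> k r1 r2 hk _ _ /PQ_meet [/PQ_arr H1 /PQ_arr H2]; apply/PQ_arr; simpl; auto.
- move=> k k' r hk _ /PQ_arr H; apply/PQ_arr; exact: Qm H hk (le_refl _).
- move=> k r r' hk hr /PQ_arr H; apply/PQ_arr; apply: Qm H (leC_refl hk) _.
  exact: le_R_val.
Qed.

Definition sG (G : seq T) := forall x, isD (nth Om G x).
Definition sD (D : seq T) := forall a, isC (nth Om D a).

Lemma sG_cons d G : isD d -> sG G -> sG (d :: G).
Proof. by move=> h1 h2; case. Qed.
Lemma sD_cons d D : isC d -> sD D -> sD (d :: D).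
Proof. by move=> h1 h2; case. Qed.

Lemma typ_sort_mut :
  (forall G D M t, typ G D M t -> sG G -> sD D -> isD t) /\
  (forall G D c t, typc G D c t -> sG G -> sD D -> isC t).
Proof.
split; [apply: (@typ_mut _ _ (fun G D M t _ => sG G -> sD D -> isD t)
                           (fun G D c t _ => sG G -> sD D -> isC t))
       | apply: (@typc_mut _ _ (fun G D M t _ => sG G -> sD D -> isD t)
                           (fun G D c t _ => sG G -> sD D -> isC t))];
  move=> //=; clear.
all: intros.
all: repeat match goal with
  | H : sG (?d :: ?G) -> _, Hd : is_true (isD ?d), HG : sG ?G |- _ => specialize (H (sG_cons Hd HG))
  | H : sD (?d :: ?G) -> _, Hd : is_true (isC ?d), HG : sD ?G |- _ => specialize (H (sD_cons Hd HG))
  | H : sG ?G -> _, H1 : sG ?G |- _ => specialize (H H1)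
  | H : sD ?G -> _, H1 : sD ?G |- _ => specialize (H H1)
  | H : le_D _ _ |- _ => apply le_D_sort in H
  | H : le_C _ _ |- _ => apply le_C_sort in H
  end; srt.
Qed.

Lemma typ_sort G D M t : typ G D M t -> sG G -> sD D -> isD t.
Proof. exact: (proj1 typ_sort_mut). Qed.
Lemma typc_sort G D c t : typc G D c t -> sG G -> sD D -> isC t.
Proof. exact: (proj2 typ_sort_mut). Qed.

Lemma le_arr (k k' r r' : T) : le_C k' k -> le_R r r' -> le_D (Arr k r) (Arr k' r').
Proof.
move=> hk hr; have [? ?] := le_C_sort hk; have [? ?] := le_R_sort hr.
apply: leD_trans (leD_arr_contra hk _) (leD_arr_co _ hr) => //.
Qed.

Lemma om_arr (k : T) : isC k -> le_D Om (Arr k (Psi Order.bottom)).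
Proof.
move=> hk; apply: leD_trans leD_omarr _; apply: le_arr; [exact: leC_om | exact: leR_bot2].
Qed.

Lemma le_R_refl_psi (a : K) : le_R (Psi a) (Psi a).
Proof. exact: leR_refl. Qed.

Lemma mono_mut :
  (forall G D M t, typ G D M t -> forall G' D', sG G -> sD D ->
     (forall x, le_D (nth Om G' x) (nth Om G x)) ->
     (forall a, le_C (nth Om D' a) (nth Om D a)) -> typ G' D' M t) /\
  (forall G D c t, typc G D c t -> forall G' D', sG G -> sD D ->
     (forall x, le_D (nth Om G' x) (nth Om G x)) ->
     (forall a, le_C (nth Om D' a) (nth Om D a)) -> typc G' D' c t).
Proof.
pose P := fun G D M t (_ : typ G D M t) => forall G' D', sG G -> sD D ->
     (forall x, le_D (nth Om G' x) (nth Om G x)) ->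
     (forall a, le_C (nth Om D' a) (nth Om D a)) -> typ G' D' M t.
pose P0 := fun G D c t (_ : typc G D c t) => forall G' D', sG G -> sD D ->
     (forall x, le_D (nth Om G' x) (nth Om G x)) ->
     (forall a, le_C (nth Om D' a) (nth Om D a)) -> typc G' D' c t.
suff [H1 H2] : (forall G D M t (h : typ G D M t), P G D M t h) /\
               (forall G D c t (h : typc G D c t), P0 G D c t h) by split; [exact: H1 | exact: H2].
split; [apply: (@typ_mut _ _ P P0) | apply: (@typc_mut _ _ P P0)]; rewrite /P /P0; clear P P0.
all: intros.
all: match goal with
  | |- typ _ _ (Var _) _ => exact: T_Sub (T_Ax _ _ _) (H1 _)
  | |- typ _ _ (Lam _) _ =>
      apply: T_Abs => //; apply: H => //; [exact: sG_cons | case=> [|y] /=; [exact: leD_refl | exact: H2]]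
  | |- typ _ _ (App _ _) _ => apply: T_App; [exact: H | exact: H0]
  | |- typ _ _ (Mu _) _ =>
      apply: T_Mu => //; apply: H => //; [exact: sD_cons | case=> [|y] /=; [exact: leC_refl | exact: H3]]
  | |- typc _ _ (Named _ _) _ =>
      apply: Tc_Sub; first (apply: T_Cmd; apply: H => //);
      apply: leC_times_r (H3 _); exact: typ_sort t H0 H1
  | |- typ _ _ _ (Meet _ _) => apply: T_Meet; [exact: H | exact: H0]
  | |- typc _ _ _ (Meet _ _) => apply: Tc_Meet; [exact: H | exact: H0]
  | |- typ _ _ _ Om => exact: T_Om
  | |- typc _ _ _ Om => exact: Tc_Om
  | Hl : le_D _ _ |- typ _ _ _ _ => apply: T_Sub Hl; apply: H => //
  | Hl : le_C _ _ |- typc _ _ _ _ => apply: Tc_Sub Hl; apply: H => //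
  end.
Qed.

Ltac useIH := match goal with IH : _ |- _ => solve [apply: IH => //] end.
Ltac fin_struct := match goal with
  | |- typ _ _ _ (Meet _ _) => apply: T_Meet; useIH
  | |- typc _ _ _ (Meet _ _) => apply: Tc_Meet; useIH
  | |- typ _ _ _ Om => exact: T_Om
  | |- typc _ _ _ Om => exact: Tc_Om
  | Hl : le_D _ _ |- typ _ _ _ _ => apply: T_Sub Hl; useIH
  | Hl : le_C _ _ |- typc _ _ _ _ => apply: Tc_Sub Hl; useIH
  end.

Lemma mono G D M t G' D' : typ G D M t -> sG G -> sD D ->
  (forall x, le_D (nth Om G' x) (nth Om G x)) ->
  (forall a, le_C (nth Om D' a) (nth Om D a)) -> typ G' D' M t.
Proof. move=> h; apply: (proj1 mono_mut _ _ _ _ h). Qed.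
Lemma monoc G D c t G' D' : typc G D c t -> sG G -> sD D ->
  (forall x, le_D (nth Om G' x) (nth Om G x)) ->
  (forall a, le_C (nth Om D' a) (nth Om D a)) -> typc G' D' c t.
Proof. move=> h; apply: (proj2 mono_mut _ _ _ _ h). Qed.

Lemma ren_v_mut :
  (forall G D M t, typ G D M t -> forall G' xi, sG G -> sD D ->
     (forall x, le_D (nth Om G' (xi x)) (nth Om G x)) -> typ G' D (ren_v xi M) t) /\
  (forall G D c t, typc G D c t -> forall G' xi, sG G -> sD D ->
     (forall x, le_D (nth Om G' (xi x)) (nth Om G x)) -> typc G' D (ren_v_c xi c) t).
Proof.
pose P := fun G D M t (_ : typ G D M t) => forall G' xi, sG G -> sD D ->
     (forall x, le_D (nth Om G' (xi x)) (nth Om G x)) -> typ G' D (ren_v xi M) t.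
pose P0 := fun G D c t (_ : typc G D c t) => forall G' xi, sG G -> sD D ->
     (forall x, le_D (nth Om G' (xi x)) (nth Om G x)) -> typc G' D (ren_v_c xi c) t.
suff [H1 H2] : (forall G D M t (h : typ G D M t), P G D M t h) /\
               (forall G D c t (h : typc G D c t), P0 G D c t h) by split; [exact: H1 | exact: H2].
split; [apply: (@typ_mut _ _ P P0) | apply: (@typc_mut _ _ P P0)]; rewrite /P /P0; clear P P0.
all: intros; simpl.
all: first [ fin_struct | match goal with
  | Hx : forall x, le_D _ _ |- typ _ _ (Var _) _ => exact: T_Sub (T_Ax _ _ _) (Hx _)
  | Hx : forall x, le_D _ _ |- typ _ _ (Lam _) _ =>
      apply: T_Abs => //; apply: H => //; [exact: sG_cons | case=> [|y] /=; [exact: leD_refl | exact: Hx]]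
  | |- typ _ _ (App _ _) _ => apply: T_App; [apply: H => // | apply: H0 => //]
  | |- typ _ _ (Mu _) _ => apply: T_Mu => //; apply: H => //; exact: sD_cons
  | |- typc _ _ (Named _ _) _ => apply: T_Cmd; apply: H => //
  end].
Qed.

Lemma ren_n_mut :
  (forall G D M t, typ G D M t -> forall D' xi, sG G -> sD D ->
     (forall a, le_C (nth Om D' (xi a)) (nth Om D a)) -> typ G D' (ren_n xi M) t) /\
  (forall G D c t, typc G D c t -> forall D' xi, sG G -> sD D ->
     (forall a, le_C (nth Om D' (xi a)) (nth Om D a)) -> typc G D' (ren_n_c xi c) t).
Proof.
pose P := fun G D M t (_ : typ G D M t) => forall D' xi, sG G -> sD D ->
     (forall a, le_C (nth Om D' (xi a)) (nth Om D a)) -> typ G D' (ren_n xi M) t.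
pose P0 := fun G D c t (_ : typc G D c t) => forall D' xi, sG G -> sD D ->
     (forall a, le_C (nth Om D' (xi a)) (nth Om D a)) -> typc G D' (ren_n_c xi c) t.
suff [H1 H2] : (forall G D M t (h : typ G D M t), P G D M t h) /\
               (forall G D c t (h : typc G D c t), P0 G D c t h) by split; [exact: H1 | exact: H2].
split; [apply: (@typ_mut _ _ P P0) | apply: (@typc_mut _ _ P P0)]; rewrite /P /P0; clear P P0.
all: intros; simpl.
all: first [ fin_struct | match goal with
  | |- typ _ _ (Var _) _ => exact: T_Ax
  | |- typ _ _ (Lam _) _ => apply: T_Abs => //; apply: H => //; exact: sG_cons
  | |- typ _ _ (App _ _) _ => apply: T_App; [apply: H => // | apply: H0 => //]
  | Hx : forall a, le_C _ _ |- typ _ _ (Mu _) _ =>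
      apply: T_Mu => //; apply: H => //; [exact: sD_cons | case=> [|y] /=; [exact: leC_refl | exact: Hx]]
  | Hx : forall a, le_C _ _ |- typc _ _ (Named _ _) _ =>
      apply: Tc_Sub; first (apply: T_Cmd; apply: H => //);
      apply: leC_times_r (Hx _); exact: typ_sort t H0 H1
  end].
Qed.

Lemma ren_v_typ G D M t G' xi : typ G D M t -> sG G -> sD D ->
  (forall x, le_D (nth Om G' (xi x)) (nth Om G x)) -> typ G' D (ren_v xi M) t.
Proof. move=> h; apply: (proj1 ren_v_mut _ _ _ _ h). Qed.
Lemma ren_n_typ G D M t D' xi : typ G D M t -> sG G -> sD D ->
  (forall a, le_C (nth Om D' (xi a)) (nth Om D a)) -> typ G D' (ren_n xi M) t.
Proof. move=> h; apply: (proj1 ren_n_mut _ _ _ _ h). Qed.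
Lemma ren_n_typc G D c t D' xi : typc G D c t -> sG G -> sD D ->
  (forall a, le_C (nth Om D' (xi a)) (nth Om D a)) -> typc G D' (ren_n_c xi c) t.
Proof. move=> h; apply: (proj2 ren_n_mut _ _ _ _ h). Qed.

Lemma shift_v G D M t d : typ G D M t -> sG G -> sD D -> typ (d :: G) D (ren_v S M) t.
Proof. move=> h sg sd; apply: (ren_v_typ h) => // x /=; exact: leD_refl (sg x). Qed.
Lemma shift_n G D M t k : typ G D M t -> sG G -> sD D -> typ G (k :: D) (ren_n S M) t.
Proof. move=> h sg sd; apply: (ren_n_typ h) => // x /=; exact: leC_refl (sd x). Qed.

Lemma subst_mut :
  (forall G' D M t, typ G' D M t -> forall G sigma, sG G' -> sD D -> sG G ->
     (forall x, typ G D (sigma x) (nth Om G' x)) -> typ G D (subst_v sigma M) t) /\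
  (forall G' D c t, typc G' D c t -> forall G sigma, sG G' -> sD D -> sG G ->
     (forall x, typ G D (sigma x) (nth Om G' x)) -> typc G D (subst_v_c sigma c) t).
Proof.
pose P := fun G' D M t (_ : typ G' D M t) => forall G sigma, sG G' -> sD D -> sG G ->
     (forall x, typ G D (sigma x) (nth Om G' x)) -> typ G D (subst_v sigma M) t.
pose P0 := fun G' D c t (_ : typc G' D c t) => forall G sigma, sG G' -> sD D -> sG G ->
     (forall x, typ G D (sigma x) (nth Om G' x)) -> typc G D (subst_v_c sigma c) t.
suff [H1 H2] : (forall G D M t (h : typ G D M t), P G D M t h) /\
               (forall G D c t (h : typc G D c t), P0 G D c t h) by split; [exact: H1 | exact: H2].
split; [apply: (@typ_mut _ _ P P0) | apply: (@typc_mut _ _ P P0)]; rewrite /P /P0; clear P P0.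
all: intros; simpl.
all: first [ match goal with Hs : forall x, typ _ _ _ (nth Om _ x) |- _ => exact: Hs end
  | fin_struct | match goal with
  | Hs : forall x, typ _ _ _ (nth Om _ x) |- typ _ _ (Lam _) _ =>
      apply: T_Abs => //; apply: H => //; [exact: sG_cons | exact: sG_cons |
        case=> [|y] /=; [exact: T_Ax | apply: shift_v => //; exact: Hs]]
  | |- typ _ _ (App _ _) _ => apply: T_App; [apply: H => // | apply: H0 => //]
  | Hs : forall x, typ _ _ _ (nth Om _ x) |- typ _ _ (Mu _) _ =>
      apply: T_Mu => //; apply: H => //; [exact: sD_cons | move=> y; apply: shift_n => //; exact: Hs]
  | |- typc _ _ (Named _ _) _ => apply: T_Cmd; apply: H => //
  end].
Qed.

Lemma subst_typ G' D M t G sigma : typ G' D M t -> sG G' -> sD D -> sG G ->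
  (forall x, typ G D (sigma x) (nth Om G' x)) -> typ G D (subst_v sigma M) t.
Proof. move=> h; apply: (proj1 subst_mut _ _ _ _ h). Qed.

Lemma arr_join (k : T) a b : isC k ->
  le_D (Meet (Arr k (Psi a)) (Arr k (Psi b))) (Arr k (Psi (Order.join a b))).
Proof.
move=> hk; apply: leD_trans (leD_arrmeet hk _ _) (leD_arr_co hk (leR_join2 a b)) => //.
Qed.

Lemma arr_join2 (k k1 k2 : T) a b : le_C k k1 -> le_C k k2 ->
  le_D (Meet (Arr k1 (Psi a)) (Arr k2 (Psi b))) (Arr k (Psi (Order.join a b))).
Proof.
move=> h1 h2; have [hk _] := le_C_sort h1.
apply: leD_trans (arr_join _ _ hk).
apply: le_D_meet2; apply: le_arr => //; exact: leR_refl.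
Qed.

Lemma gen_var G D x t : typ G D (Var x) t -> sG G -> le_D (nth Om G x) t.
Proof.
intros h sg; remember (Var x) as e eqn:E; induction h; try discriminate.
- injection E => ->; exact: leD_refl (sg _).
- exact: leD_glb (IHh1 E sg) (IHh2 E sg).
- subst; exact: leD_om (sg _).
- exact: leD_trans (IHh E sg) H.
Qed.

Lemma gen_cmd G D b P t : typc G D (Named b P) t -> sG G -> sD D ->
  exists dl, typ G D P dl /\ le_C (Times dl (nth Om D b)) t.
Proof.
intros h sg sd; remember (Named b P) as e eqn:E; induction h; try discriminate.
- injection E => ? ?; subst; exists dl; split=> //; apply: leC_refl; srt; exact: typ_sort H sg sd.
- have [d1 [g1 l1]] := IHh1 E sg sd; have [d2 [g2 l2]] := IHh2 E sg sd.
  have i1 := typ_sort g1 sg sd; have i2 := typ_sort g2 sg sd.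
  exists (Meet d1 d2); split; first exact: T_Meet.
  apply: leC_glb; [apply: leC_trans l1 | apply: leC_trans l2];
    apply: leC_times_l => //; [exact: leD_meetl | exact: leD_meetr].
- subst; exists Om; split; first exact: T_Om; apply: leC_om => /=; srt.
- have [d1 [g1 l1]] := IHh E sg sd; exists d1; split=> //; exact: leC_trans l1 H.
Qed.

Definition Q_Lam G D M (k : T) (a : K) :=
  isC k -> typ (hd k :: G) D M (Arr (tl k) (Psi a)).
Definition Q_App G D M N (k : T) (a : K) :=
  isC k -> exists dl, isD dl /\ typ G D M (Arr (Times dl k) (Psi a)) /\ typ G D N dl.
Definition Q_Mu G D c (k : T) (a : K) :=
  isC k -> exists k', isC k' /\ typc G (k :: D) c (Times (Arr k' (Psi a)) k').
Definition Q_Ty G D M (k : T) (a : K) := isC k -> typ G D M (Arr k (Psi a)).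

Lemma Qgood_Lam G D M : sG G -> sD D -> Qgood (Q_Lam G D M).
Proof.
move=> sg sd; split.
- move=> k k' a b H hkk' ba hk; have [_ hk'] := le_C_sort hkk'.
  have [hh ht] := le_C_hdtl hkk'.
  have [hd1 _] := hdtl_sort hk'.
  have h2 : typ (hd k :: G) D M (Arr (tl k') (Psi a)).
    apply: (mono (H hk')) => //; first exact: sG_cons.
    + case=> [|y] //=; exact: leD_refl (sg y).
    + move=> y; exact: leC_refl (sd y).
  apply: T_Sub h2 _; apply: le_arr => //; exact: le_R_psi.
- move=> k hk _; have [_ ht] := hdtl_sort hk; exact: T_Sub (T_Om _ _ _) (om_arr ht).
- move=> k a b H1 H2 hk; have [_ ht] := hdtl_sort hk.
  exact: T_Sub (T_Meet (H1 hk) (H2 hk)) (arr_join _ _ ht).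
Qed.

Lemma Qgood_Ty G D M : Qgood (Q_Ty G D M).
Proof.
split.
- move=> k k' a b H hkk' ba hk; have [_ hk'] := le_C_sort hkk'.
  apply: T_Sub (H hk') _; apply: le_arr => //; exact: le_R_psi.
- move=> k hk _; exact: T_Sub (T_Om _ _ _) (om_arr hk).
- move=> k a b H1 H2 hk; exact: T_Sub (T_Meet (H1 hk) (H2 hk)) (arr_join _ _ hk).
Qed.

Lemma Qgood_App G D M N : sG G -> sD D -> Qgood (Q_App G D M N).
Proof.
move=> sg sd; split.
- move=> k k' a b H hkk' ba hk; have [_ hk'] := le_C_sort hkk'.
  have [dl [hd [h1 h2]]] := H hk'; exists dl; split=> //; split=> //.
  apply: T_Sub h1 _; apply: le_arr; [exact: leC_times_r | exact: le_R_psi].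
- move=> k hk _; exists Om; split=> //; split; last exact: T_Om.
  apply: T_Sub (T_Om _ _ _) (om_arr _) => /=; srt.
- move=> k a b H1 H2 hk.
  have [d1 [i1 [h1 n1]]] := H1 hk; have [d2 [i2 [h2 n2]]] := H2 hk.
  exists (Meet d1 d2); split; first by srt.
  split; last exact: T_Meet.
  apply: T_Sub (T_Meet h1 h2) (arr_join2 _ _ _ _); apply: leC_times_l => //;
    [exact: leD_meetl | exact: leD_meetr].
Qed.

Lemma Qgood_Mu G D c : sG G -> sD D -> Qgood (Q_Mu G D c).
Proof.
move=> sg sd; split.
- move=> k k' a b H hkk' ba hk; have [_ hk'] := le_C_sort hkk'.
  have [k0 [i0 h]] := H hk'; exists k0; split=> //.
  apply: Tc_Sub (monoc h sg (sD_cons hk' sd) _ _) _.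
  + move=> y; exact: leD_refl (sg y).
  + case=> [|y] //=; exact: leC_refl (sd y).
  + apply: leC_times_l => //; apply: le_arr; [exact: leC_refl | exact: le_R_psi].
- move=> k hk _; exists Om; split=> //.
  apply: Tc_Sub (Tc_Om _ _ _) _; apply: leC_trans leC_omtimes _.
  apply: leC_times_l => //; exact: om_arr.
- move=> k a b H1 H2 hk.
  have [k1 [i1 h1]] := H1 hk; have [k2 [i2 h2]] := H2 hk.
  exists (Meet k1 k2); split; first by srt.
  apply: Tc_Sub (Tc_Meet h1 h2) _.
  apply: leC_trans (leC_timesmeet _ _ i1 i2) _; try by srt.
  apply: leC_times_l; last by srt.
  apply: arr_join2; [exact: leC_meetl | exact: leC_meetr].
Qed.

Lemma gen_lam G D M t : typ G D (Lam M) t -> sG G -> sD D -> PQ (Q_Lam G D M) t.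
Proof.
intros h sg sd; remember (Lam M) as e eqn:E; induction h; try discriminate.
- injection E => ?; subst; apply/PQ_arr => /= _.
  have := typ_sort h (sG_cons H sg) sd => /= /andP[hk hr].
  apply: T_Sub h _; apply: le_arr; [exact: leC_refl | exact: (proj1 (le_R_norm hr))].
- apply/PQ_meet; split; [exact: IHh1 E sg sd | exact: IHh2 E sg sd].
- by move=> k a [].
- exact: PQ_le (@Qgood_Lam G D M sg sd) H (IHh E sg sd).
Qed.

Lemma gen_app G D M N t : typ G D (App M N) t -> sG G -> sD D -> PQ (Q_App G D M N) t.
Proof.
intros h sg sd; remember (App M N) as e eqn:E; induction h; try discriminate.
- injection E => ? ?; subst; apply/PQ_arr => /= _.
  have := typ_sort h1 sg sd => /= /andP[/andP[hd hk] hr].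
  exists dl; split=> //; split=> //.
  apply: T_Sub h1 _; apply: le_arr; [apply: leC_refl; by srt | exact: (proj1 (le_R_norm hr))].
- apply/PQ_meet; split; [exact: IHh1 E sg sd | exact: IHh2 E sg sd].
- by move=> k a [].
- exact: PQ_le (@Qgood_App G D M N sg sd) H (IHh E sg sd).
Qed.

Lemma gen_mu G D c t : typ G D (Mu c) t -> sG G -> sD D -> PQ (Q_Mu G D c) t.
Proof.
intros h sg sd; remember (Mu c) as e eqn:E; induction h; try discriminate.
- injection E => ?; subst; apply/PQ_arr => /= _.
  have := typc_sort H0 sg (sD_cons H sd) => /= /andP[/andP[hk' hr] _].
  exists k'; split=> //.
  apply: Tc_Sub H0 _; apply: leC_times_l => //.
  apply: le_arr; [exact: leC_refl | exact: (proj1 (le_R_norm hr))].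
- apply/PQ_meet; split; [exact: IHh1 E sg sd | exact: IHh2 E sg sd].
- by move=> k a [].
- exact: PQ_le (@Qgood_Mu G D c sg sd) H (IHh E sg sd).
Qed.

Lemma nf_sort (t k : T) a : isD t -> List.In (k, a) (nf t) -> isC k.
Proof.
elim: t => //=.
- by move=> b _ [[<- _]|[]].
- by move=> s IHs u IHu /andP[hs hu] /in_app_or' [/(IHs hs)|/(IHu hu)].
- by move=> k0 _ r _ /andP[hk _] [[<- _]|[]].
Qed.

Lemma nf_proj (t k : T) a : isD t -> List.In (k, a) (nf t) -> le_D t (Arr k (Psi a)).
Proof.
elim: t => //=.
- by move=> b _ [[<- <-]|[]]; exact: leD_psiarr.
- move=> s IHs u IHu /andP[hs hu] /in_app_or' [h|h].
  + apply: leD_trans (IHs hs h); exact: leD_meetl.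
  + apply: leD_trans (IHu hu h); exact: leD_meetr.
- move=> k0 _ r _ /andP[hk hr] [[<- <-]|[]].
  apply: le_arr; [exact: leC_refl | exact: (proj1 (le_R_norm hr))].
Qed.

Lemma arrdec G D X t : isD t ->
  (forall k a, List.In (k, a) (nf t) -> typ G D X (Arr k (Psi a))) -> typ G D X t.
Proof.
elim: t => //=.
- move=> b _ H; apply: T_Sub (H Om b (or_introl erefl)) _; exact: leD_arrpsi.
- move=> _ _; exact: T_Om.
- move=> s IHs u IHu /andP[hs hu] H; apply: T_Meet.
  + apply: IHs => // k a h; apply: H; apply: in_or_app'; by left.
  + apply: IHu => // k a h; apply: H; apply: in_or_app'; by right.
- move=> k _ r _ /andP[hk hr] H; apply: T_Sub (H k (val r) (or_introl erefl)) _.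
  apply: le_arr; [exact: leC_refl | exact: (proj2 (le_R_norm hr))].
Qed.

Definition mlist (G1 G2 : seq T) : seq T :=
  mkseq (fun i => Meet (nth Om G1 i) (nth Om G2 i)) (maxn (size G1) (size G2)).

Lemma mlist_nth G1 G2 i :
  nth Om (mlist G1 G2) i = Meet (nth Om G1 i) (nth Om G2 i) \/
  [/\ nth Om (mlist G1 G2) i = Om, nth Om G1 i = Om & nth Om G2 i = Om].
Proof.
rewrite /mlist; case: (ltnP i (maxn (size G1) (size G2))) => h.
- by left; rewrite nth_mkseq.
- right; rewrite !nth_default //.
  + exact: leq_trans (leq_maxr _ _) h.
  + exact: leq_trans (leq_maxl _ _) h.
  + by rewrite size_mkseq.
Qed.

Lemma mlist_sG G1 G2 : sG G1 -> sG G2 -> sG (mlist G1 G2).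
Proof.
move=> s1 s2 i; case: (mlist_nth G1 G2 i) => [->|[-> _ _]] //=.
by rewrite s1 s2.
Qed.

Lemma mlist_le1 G1 G2 : sG G1 -> sG G2 -> forall i, le_D (nth Om (mlist G1 G2) i) (nth Om G1 i).
Proof.
move=> s1 s2 i; case: (mlist_nth G1 G2 i) => [->|[-> -> _]].
- exact: leD_meetl.
- exact: leD_refl.
Qed.

Lemma mlist_le2 G1 G2 : sG G1 -> sG G2 -> forall i, le_D (nth Om (mlist G1 G2) i) (nth Om G2 i).
Proof.
move=> s1 s2 i; case: (mlist_nth G1 G2 i) => [->|[-> _ ->]].
- exact: leD_meetr.
- exact: leD_refl.
Qed.

Lemma mlist_typ G D X G1 G2 i : typ G D X (nth Om G1 i) -> typ G D X (nth Om G2 i) ->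
  typ G D X (nth Om (mlist G1 G2) i).
Proof.
move=> h1 h2; case: (mlist_nth G1 G2 i) => [->|[-> _ _]].
- exact: T_Meet.
- exact: T_Om.
Qed.

Definition PV M := forall (G G' D : seq T) t xi, sG G -> sG G' -> sD D ->
     (forall x, le_D (nth Om G x) (nth Om G' (xi x))) ->
     typ G' D (ren_v xi M) t -> typ G D M t.
Definition PVc c := forall (G G' D : seq T) t xi, sG G -> sG G' -> sD D ->
     (forall x, le_D (nth Om G x) (nth Om G' (xi x))) ->
     typc G' D (ren_v_c xi c) t -> typc G D c t.
Definition PN M := forall (G D D' : seq T) t xi, sG G -> sD D -> sD D' ->
     (forall a, le_C (nth Om D a) (nth Om D' (xi a))) ->
     typ G D' (ren_n xi M) t -> typ G D M t.
Definition PNc c := forall (G D D' : seq T) t xi, sG G -> sD D -> sD D' ->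
     (forall a, le_C (nth Om D a) (nth Om D' (xi a))) ->
     typc G D' (ren_n_c xi c) t -> typc G D c t.

Lemma anti_v_mut : (forall M, PV M) /\ (forall c, PVc c).
Proof.
split; [apply: (@term_mut PV PVc) | apply: (@cmd_mut PV PVc)]; rewrite /PV /PVc.
1,6: move=> x G G' D t xi sg sg' sd hx /= /gen_var h; apply: T_Sub (T_Ax _ _ _) _;
     exact: leD_trans (hx x) (h sg').
1,5: move=> M IH1 G G' D t xi sg sg' sd hx /= h; remember (Lam (ren_v (upren xi) M)) as e eqn:E;
     induction h; try discriminate;
     [ injection E => ?; subst; apply: T_Abs => //; apply: (IH1 _ (dl :: G0) _ _ (upren xi)) => //;
       [ exact: sG_cons | exact: sG_cons | case=> [|y] /=; [exact: leD_refl | exact: hx] ]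
     | apply: T_Meet; useIH | exact: T_Om | apply: T_Sub H; useIH ].
1,4: move=> M IH1 N IH3 G G' D t xi sg sg' sd hx /= h; remember (App (ren_v xi M) (ren_v xi N)) as e eqn:E;
     induction h; try discriminate;
     [ injection E => ? ?; subst; apply: T_App; [apply: (IH1 _ G0 _ (Arr (Times dl k) r) xi) | apply: (IH3 _ G0 _ dl xi)] => //
     | apply: T_Meet; useIH | exact: T_Om | apply: T_Sub H; useIH ].
1,3: move=> c IH1 G G' D t xi sg sg' sd hx /= h; remember (Mu (ren_v_c xi c)) as e eqn:E;
     induction h; try discriminate;
     [ injection E => ?; subst; exact: (T_Mu H (IH1 _ _ _ _ xi sg sg' (sD_cons H sd) hx H0))
     | apply: T_Meet; useIH | exact: T_Om | apply: T_Sub H; useIH ].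
1,2: move=> a M IH1 G G' D t xi sg sg' sd hx /= h; remember (Named a (ren_v xi M)) as e eqn:E;
     induction h; try discriminate;
     [ injection E => ? ?; subst; apply: T_Cmd; apply: (IH1 _ G0 _ _ xi) => //
     | apply: Tc_Meet; useIH | exact: Tc_Om | apply: Tc_Sub H; useIH ].
Qed.

Lemma anti_n_mut : (forall M, PN M) /\ (forall c, PNc c).
Proof.
split; [apply: (@term_mut PN PNc) | apply: (@cmd_mut PN PNc)]; rewrite /PN /PNc.
1,6: move=> x G D D' t xi sg sd sd' hx /= /gen_var h; apply: T_Sub (T_Ax _ _ _) _; exact: h sg.
1,5: move=> M IH2 G D D' t xi sg sd sd' hx /= h; remember (Lam (ren_n xi M)) as e eqn:E;
     induction h; try discriminate;
     [ injection E => ?; subst; apply: T_Abs => //; apply: (IH2 _ _ D0 _ xi) => //; exact: sG_cons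
     | apply: T_Meet; useIH | exact: T_Om | apply: T_Sub H; useIH ].
1,4: move=> M IH2 N IH4 G D D' t xi sg sd sd' hx /= h; remember (App (ren_n xi M) (ren_n xi N)) as e eqn:E;
     induction h; try discriminate;
     [ injection E => ? ?; subst; apply: T_App; [apply: (IH2 _ _ D0 (Arr (Times dl k) r) xi) | apply: (IH4 _ _ D0 dl xi)] => //
     | apply: T_Meet; useIH | exact: T_Om | apply: T_Sub H; useIH ].
1,3: move=> c IH2 G D D' t xi sg sd sd' hx /= h; remember (Mu (ren_n_c (upren xi) c)) as e eqn:E;
     induction h; try discriminate;
     [ injection E => ?; subst; apply: (T_Mu H);
       apply: (IH2 _ _ _ _ (upren xi) sg (sD_cons H sd) (sD_cons H sd') _ H0);
       case=> [|y] /=; [exact: leC_refl | exact: hx]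
     | apply: T_Meet; useIH | exact: T_Om | apply: T_Sub H; useIH ].
1,2: move=> a M IH2 G D D' t xi sg sd sd' hx /= h; remember (Named (xi a) (ren_n xi M)) as e eqn:E;
     induction h; try discriminate;
     [ injection E => ? ?; subst; have hP := IH2 _ _ _ _ xi sg sd sd' hx H;
       apply: Tc_Sub; first (apply: T_Cmd; exact: hP);
       apply: leC_times_r (hx _); exact: typ_sort H sg sd'
     | apply: Tc_Meet; useIH | exact: Tc_Om | apply: Tc_Sub H; useIH ].
Qed.

Lemma anti_v_typ G G' D t xi M : typ G' D (ren_v xi M) t -> sG G -> sG G' -> sD D ->
  (forall x, le_D (nth Om G x) (nth Om G' (xi x))) -> typ G D M t.
Proof. move=> h sg sg' sd hx; exact: (proj1 anti_v_mut) M G G' D t xi sg sg' sd hx h. Qed.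
Lemma anti_n_typ G D D' t xi M : typ G D' (ren_n xi M) t -> sG G -> sD D -> sD D' ->
  (forall a, le_C (nth Om D a) (nth Om D' (xi a))) -> typ G D M t.
Proof. move=> h sg sd sd' hx; exact: (proj1 anti_n_mut) M G D D' t xi sg sd sd' hx h. Qed.
Lemma anti_n_typc G D D' t xi c : typc G D' (ren_n_c xi c) t -> sG G -> sD D -> sD D' ->
  (forall a, le_C (nth Om D a) (nth Om D' (xi a))) -> typc G D c t.
Proof. move=> h sg sd sd' hx; exact: (proj2 anti_n_mut) c G D D' t xi sg sd sd' hx h. Qed.

Lemma comb_ctx G D sigma Gs1 Gs2 : sG Gs1 -> sG Gs2 ->
  (forall x, typ G D (sigma x) (nth Om Gs1 x)) -> (forall x, typ G D (sigma x) (nth Om Gs2 x)) ->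
  sG (mlist Gs1 Gs2) /\ (forall x, typ G D (sigma x) (nth Om (mlist Gs1 Gs2) x)).
Proof. move=> s1 s2 h1 h2; split; [exact: mlist_sG | move=> x; exact: mlist_typ]. Qed.

Lemma mono_ml1 Gs1 Gs2 D M t : typ Gs1 D M t -> sG Gs1 -> sG Gs2 -> sD D -> typ (mlist Gs1 Gs2) D M t.
Proof. move=> h s1 s2 sd; apply: (mono h) => //; [exact: mlist_le1 | move=> a; exact: leC_refl]. Qed.
Lemma mono_ml2 Gs1 Gs2 D M t : typ Gs2 D M t -> sG Gs1 -> sG Gs2 -> sD D -> typ (mlist Gs1 Gs2) D M t.
Proof. move=> h s1 s2 sd; apply: (mono h) => //; [exact: mlist_le2 | move=> a; exact: leC_refl]. Qed.
Lemma monoc_ml1 Gs1 Gs2 D c t : typc Gs1 D c t -> sG Gs1 -> sG Gs2 -> sD D -> typc (mlist Gs1 Gs2) D c t.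
Proof. move=> h s1 s2 sd; apply: (monoc h) => //; [exact: mlist_le1 | move=> a; exact: leC_refl]. Qed.
Lemma monoc_ml2 Gs1 Gs2 D c t : typc Gs2 D c t -> sG Gs1 -> sG Gs2 -> sD D -> typc (mlist Gs1 Gs2) D c t.
Proof. move=> h s1 s2 sd; apply: (monoc h) => //; [exact: mlist_le2 | move=> a; exact: leC_refl]. Qed.

Lemma sG_nil : sG [::].
Proof. by move=> x; rewrite nth_nil. Qed.

Definition PX M := forall (G D : seq T) sigma t, sG G -> sD D ->
  typ G D (subst_v sigma M) t ->
  exists Gs, [/\ sG Gs, (forall x, typ G D (sigma x) (nth Om Gs x)) & typ Gs D M t].
Definition PXc c := forall (G D : seq T) sigma t, sG G -> sD D ->
  typc G D (subst_v_c sigma c) t ->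
  exists Gs, [/\ sG Gs, (forall x, typ G D (sigma x) (nth Om Gs x)) & typc Gs D c t].

Definition monoP (P : seq T -> Prop) := forall Gs Gs', sG Gs -> sG Gs' ->
  (forall x, le_D (nth Om Gs' x) (nth Om Gs x)) -> P Gs -> P Gs'.

Lemma monoP_typ D M t : sD D -> monoP (fun Gs => typ Gs D M t).
Proof. move=> sd Gs Gs' s1 s2 hx h; apply: (mono h) => //; move=> a; exact: leC_refl. Qed.
Lemma monoP_typc D c t : sD D -> monoP (fun Gs => typc Gs D c t).
Proof. move=> sd Gs Gs' s1 s2 hx h; apply: (monoc h) => //; move=> a; exact: leC_refl. Qed.

Lemma xcomb G D sigma (P1 P2 : seq T -> Prop) : monoP P1 -> monoP P2 ->
  (exists Gs, [/\ sG Gs, (forall x, typ G D (sigma x) (nth Om Gs x)) & P1 Gs]) ->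
  (exists Gs, [/\ sG Gs, (forall x, typ G D (sigma x) (nth Om Gs x)) & P2 Gs]) ->
  exists Gs, [/\ sG Gs, (forall x, typ G D (sigma x) (nth Om Gs x)) & P1 Gs /\ P2 Gs].
Proof.
move=> m1 m2 [Gs1 [s1 h1 p1]] [Gs2 [s2 h2 p2]].
have [sm hm] := comb_ctx s1 s2 h1 h2.
exists (mlist Gs1 Gs2); split=> //; split.
- apply: (m1 Gs1) => //; exact: mlist_le1.
- apply: (m2 Gs2) => //; exact: mlist_le2.
Qed.

Lemma subx_mut : (forall M, PX M) /\ (forall c, PXc c).
Proof.
have cV : forall x, PX (Var x).
  move=> x G D sigma t sg sd /= h; exists (set_nth Om [::] x t); split.
  - move=> y; rewrite nth_set_nth /=; case: eqP => _ //; [exact: typ_sort h sg sd | by rewrite nth_nil].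
  - move=> y; rewrite nth_set_nth /=; case: eqP => [->|_] //; rewrite nth_nil; exact: T_Om.
  - have := T_Ax (set_nth Om [::] x t) D x; by rewrite nth_set_nth /= eqxx.
have cL : forall M, PX M -> PX (Lam M).
  move=> M IH G D sigma t sg sd /= h; remember (Lam (subst_v (up_v sigma) M)) as e eqn:E.
  induction h; try discriminate.
  - injection E => ?; subst.
    have [Gs' [sGs' hs hM]] := IH _ _ _ _ (sG_cons H sg) sd h.
    have := hs 0 => /= /gen_var h0; have {}h0 := h0 (sG_cons H sg).
    exists (behead Gs'); split.
    + by move=> y; rewrite nth_behead.
    + move=> y; rewrite nth_behead; have := hs y.+1 => /= hy.
      apply: (anti_v_typ hy) => //; first exact: sG_cons.
      move=> z /=; exact: leD_refl (sg z).
    + apply: T_Abs => //; apply: (mono hM) => //.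
      * case=> [|y] //=; rewrite nth_behead; exact: leD_refl (sGs' _).
      * move=> a; exact: leC_refl (sd a).
  - have [Gs [s1 g1 [p1 p2]]] := xcomb (@monoP_typ D (Lam M) s sd) (@monoP_typ D (Lam M) t sd)
      (IHh1 sg sd E) (IHh2 sg sd E).
    exists Gs; split => //; exact: T_Meet.
  - exists [::]; split; [exact: sG_nil | move=> y; rewrite nth_nil; exact: T_Om | exact: T_Om].
  - have [Gs [s1 hs1 hm1]] := IHh sg sd E; exists Gs; split => //; exact: T_Sub hm1 H.
have cA : forall M, PX M -> forall N, PX N -> PX (App M N).
  move=> M IH1 N IH2 G D sigma t sg sd /= h; remember (App (subst_v sigma M) (subst_v sigma N)) as e eqn:E.
  induction h; try discriminate.
  - injection E => ? ?; subst.
    have [Gs [s1 g1 [p1 p2]]] := xcomb (@monoP_typ D M (Arr (Times dl k) r) sd) (@monoP_typ D N dl sd)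
      (IH1 _ _ _ _ sg sd h1) (IH2 _ _ _ _ sg sd h2).
    exists Gs; split => //; exact: T_App p1 p2.
  - have [Gs [s1 g1 [p1 p2]]] := xcomb (@monoP_typ D (App M N) s sd) (@monoP_typ D (App M N) t sd)
      (IHh1 sg sd E) (IHh2 sg sd E).
    exists Gs; split => //; exact: T_Meet.
  - exists [::]; split; [exact: sG_nil | move=> y; rewrite nth_nil; exact: T_Om | exact: T_Om].
  - have [Gs [s1 hs1 hm1]] := IHh sg sd E; exists Gs; split => //; exact: T_Sub hm1 H.
have cM : forall c, PXc c -> PX (Mu c).
  move=> c IH G D sigma t sg sd /= h; remember (Mu (subst_v_c (fun n => ren_n S (sigma n)) c)) as e eqn:E.
  induction h; try discriminate.
  - injection E => ?; subst.
    have [Gs [s1 hs hc]] := IH _ _ _ _ sg (sD_cons H sd) H0.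
    exists Gs; split => //; last exact: T_Mu H hc.
    move=> y; have := hs y => /= hy; apply: (anti_n_typ hy) => //; first exact: sD_cons.
    move=> a /=; exact: leC_refl (sd a).
  - have [Gs [s1 g1 [p1 p2]]] := xcomb (@monoP_typ D (Mu c) s sd) (@monoP_typ D (Mu c) t sd)
      (IHh1 sg sd E) (IHh2 sg sd E).
    exists Gs; split => //; exact: T_Meet.
  - exists [::]; split; [exact: sG_nil | move=> y; rewrite nth_nil; exact: T_Om | exact: T_Om].
  - have [Gs [s1 hs1 hm1]] := IHh sg sd E; exists Gs; split => //; exact: T_Sub hm1 H.
have cN : forall a M, PX M -> PXc (Named a M).
  move=> a M IH G D sigma t sg sd /= h; remember (Named a (subst_v sigma M)) as e eqn:E.
  induction h; try discriminate.
  - injection E => ? ?; subst.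
    have [Gs [s1 hs hm]] := IH _ _ _ _ sg sd H.
    exists Gs; split => //; exact: T_Cmd.
  - have [Gs [s1 g1 [p1 p2]]] := xcomb (@monoP_typc D (Named a M) s sd) (@monoP_typc D (Named a M) t sd)
      (IHh1 sg sd E) (IHh2 sg sd E).
    exists Gs; split => //; exact: Tc_Meet.
  - exists [::]; split; [exact: sG_nil | move=> y; rewrite nth_nil; exact: T_Om | exact: Tc_Om].
  - have [Gs [s1 hs1 hm1]] := IHh sg sd E; exists Gs; split => //; exact: Tc_Sub hm1 H.
split; [exact: (@term_mut PX PXc cV cL cA cM cN) | exact: (@cmd_mut PX PXc cV cL cA cM cN)].
Qed.

Lemma subx_typ G D sigma M t : typ G D (subst_v sigma M) t -> sG G -> sD D ->
  exists Gs, [/\ sG Gs, (forall x, typ G D (sigma x) (nth Om Gs x)) & typ Gs D M t].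
Proof. move=> h sg sd; exact: (proj1 subx_mut) M G D sigma t sg sd h. Qed.

Definition ctxOK (D1 D2 : seq T) al (dl : T) :=
  [/\ sD D1, nth Om D1 al = Times dl (nth Om D2 al) &
      forall b, b <> al -> nth Om D1 b = nth Om D2 b].

Lemma ctxOK_cons D1 D2 al dl k : isC k -> ctxOK D1 D2 al dl -> ctxOK (k :: D1) (k :: D2) al.+1 dl.
Proof.
move=> hk [s1 e1 e2]; split => //=; first exact: sD_cons.
case=> [|b] //= hb; apply: e2 => eb; apply: hb; by rewrite eb.
Qed.

Lemma retarget D1 D2 al dl dl1 : isD dl1 -> le_D dl dl1 -> sD D2 -> ctxOK D1 D2 al dl ->
  exists D1', ctxOK D1' D2 al dl1 /\ forall a, le_C (nth Om D1 a) (nth Om D1' a).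
Proof.
move=> i1 hle sd2 [s1 e1 e2].
exists (set_nth Om D1 al (Times dl1 (nth Om D2 al))); split; first split.
- move=> a; rewrite nth_set_nth /=; case: eqP => _ //=; by rewrite i1 sd2.
- by rewrite nth_set_nth /= eqxx.
- move=> b hb; rewrite nth_set_nth /=; case: eqP => // eb; exact: e2.
- move=> a; rewrite nth_set_nth /=; case: eqP => [->|_]; last exact: leC_refl.
  rewrite e1; apply: leC_times_l hle _; exact: sd2.
Qed.

Definition monoD (P : seq T -> Prop) := forall D1 D1', sD D1 -> sD D1' ->
  (forall a, le_C (nth Om D1' a) (nth Om D1 a)) -> P D1 -> P D1'.

Lemma monoD_typ G M t : sG G -> monoD (fun D => typ G D M t).
Proof. move=> sg D1 D1' s1 s2 ha h; apply: (mono h) => // x; exact: leD_refl (sg x). Qed.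
Lemma monoD_cmd G c r : sG G -> monoD (fun D => exists k'', typc G D c (Times (Arr k'' r) k'')).
Proof.
move=> sg D1 D1' s1 s2 ha [k'' h]; exists k''; apply: (monoc h) => // x; exact: leD_refl (sg x).
Qed.

Lemma lift (P : seq T -> Prop) D2 al dl dl1 : monoD P -> isD dl1 -> le_D dl dl1 -> sD D2 ->
  (forall D1, ctxOK D1 D2 al dl1 -> P D1) -> forall D1, ctxOK D1 D2 al dl -> P D1.
Proof.
move=> mP i1 hle sd2 H D1 ok; have [D1' [ok' hl]] := retarget i1 hle sd2 ok.
have [s1 _ _] := ok; have [s1' _ _] := ok'.
exact: mP D1' D1 s1' s1 hl (H D1' ok').
Qed.

Lemma rcomb G D2 al L (P1 P2 : seq T -> Prop) : sD D2 -> monoD P1 -> monoD P2 ->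
  (exists dl, [/\ isD dl, typ G D2 L dl & forall D1, ctxOK D1 D2 al dl -> P1 D1]) ->
  (exists dl, [/\ isD dl, typ G D2 L dl & forall D1, ctxOK D1 D2 al dl -> P2 D1]) ->
  exists dl, [/\ isD dl, typ G D2 L dl & forall D1, ctxOK D1 D2 al dl -> P1 D1 /\ P2 D1].
Proof.
move=> sd2 m1 m2 [d1 [i1 l1 h1]] [d2 [i2 l2 h2]].
exists (Meet d1 d2); split; [by srt | exact: T_Meet | move=> D1 ok; split].
- exact: lift m1 i1 (leD_meetl i1 i2) sd2 h1 D1 ok.
- exact: lift m2 i2 (leD_meetr i1 i2) sd2 h2 D1 ok.
Qed.

Definition PS M := forall G (D1 D2 : seq T) al de L t, sG G -> sD D2 -> isD de ->
  ctxOK D1 D2 al de -> typ G D2 L de -> typ G D1 M t -> typ G D2 (ssub al L M) t.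
Definition PSc c := forall G (D1 D2 : seq T) al de L t, sG G -> sD D2 -> isD de ->
  ctxOK D1 D2 al de -> typ G D2 L de -> typc G D1 c t ->
  forall k' r, le_C t (Times (Arr k' r) k') ->
  exists k'', typc G D2 (ssub_c al L c) (Times (Arr k'' r) k'').

Lemma ss_mut : (forall M, PS M) /\ (forall c, PSc c).
Proof.
have cV : forall x, PS (Var x).
  move=> x G D1 D2 al de L t sg sd2 idl [s1 _ _] hL /= /gen_var h.
  exact: T_Sub (T_Ax _ _ _) (h sg).
have cL : forall M, PS M -> PS (Lam M).
  move=> M IH G D1 D2 al de L t sg sd2 idl ok hL /= h; remember (Lam M) as e eqn:E.
  induction h; try discriminate.
  - injection E => ?; subst; apply: T_Abs => //.
    apply: (IH _ _ _ _ de _ _ (sG_cons H sg) sd2 idl ok) => //; exact: shift_v.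
  - apply: T_Meet; useIH.
  - exact: T_Om.
  - apply: T_Sub H; useIH.
have cA : forall M, PS M -> forall N, PS N -> PS (App M N).
  move=> M IH1 N IH2 G D1 D2 al de L t sg sd2 idl ok hL /= h; remember (App M N) as e eqn:E.
  induction h; try discriminate.
  - injection E => ? ?; subst.
    have a1 := IH1 _ _ _ _ de _ _ sg sd2 idl ok hL h1.
    have a2 := IH2 _ _ _ _ de _ _ sg sd2 idl ok hL h2.
    exact: T_App a1 a2.
  - apply: T_Meet; useIH.
  - exact: T_Om.
  - apply: T_Sub H; useIH.
have cM : forall c, PSc c -> PS (Mu c).
  move=> c IH G D1 D2 al de L t sg sd2 idl ok hL /= h; remember (Mu c) as e eqn:E.
  induction h; try discriminate.
  - injection E => ?; subst.
    have [s1 _ _] := ok.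
    have ic := typc_sort H0 sg (sD_cons H s1).
    have [k'' h'] := IH _ _ _ _ de _ _ sg (sD_cons H sd2) idl (ctxOK_cons H ok)
       (shift_n _ hL sg sd2) H0 k' r (leC_refl ic).
    exact: T_Mu H h'.
  - apply: T_Meet; useIH.
  - exact: T_Om.
  - apply: T_Sub H; useIH.
have cN : forall a M, PS M -> PSc (Named a M).
  move=> b P IH G D1 D2 al de L t sg sd2 idl ok hL h k' r hX.
  have [s1 e1 e2] := ok.
  have [d [hP hle]] := gen_cmd h sg s1.
  have [/= hd1 tl1] := le_C_hdtl (leC_trans hle hX).
  have [_ /= /andP[ik' ir]] := le_D_sort hd1.
  have hP' := IH _ _ _ _ de _ _ sg sd2 idl ok hL hP.
  rewrite /=; case: PeanoNat.Nat.eqb_spec => [eb|nb].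
  - subst b; exists (nth Om D2 al); apply: T_Cmd; apply: T_App _ hL.
    apply: T_Sub hP' (leD_trans hd1 _); apply: le_arr; last exact: leR_refl.
    by rewrite -e1.
  - exists k'; apply: Tc_Sub; first (apply: T_Cmd; exact: hP').
    rewrite -(e2 _ nb); exact: leC_trans hle hX.
split; [exact: (@term_mut PS PSc cV cL cA cM cN) | exact: (@cmd_mut PS PSc cV cL cA cM cN)].
Qed.

Lemma ss_typ G D1 D2 al de L M t : sG G -> sD D2 -> isD de ->
  ctxOK D1 D2 al de -> typ G D2 L de -> typ G D1 M t -> typ G D2 (ssub al L M) t.
Proof. move=> sg sd2 ide ok hL h; exact: (proj1 ss_mut M G D1 D2 al de L t sg sd2 ide ok hL h). Qed.
Lemma ss_cmd G D1 D2 al de L c t : sG G -> sD D2 -> isD de ->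
  ctxOK D1 D2 al de -> typ G D2 L de -> typc G D1 c t ->
  forall k' r, le_C t (Times (Arr k' r) k') ->
  exists k'', typc G D2 (ssub_c al L c) (Times (Arr k'' r) k'').
Proof. move=> sg sd2 ide ok hL h; exact: (proj2 ss_mut c G D1 D2 al de L t sg sd2 ide ok hL h). Qed.

Definition PR M := forall G (D2 : seq T) al L t, sG G -> sD D2 ->
  typ G D2 (ssub al L M) t ->
  exists de, [/\ isD de, typ G D2 L de & forall D1, ctxOK D1 D2 al de -> typ G D1 M t].
Definition PRc c := forall G (D2 : seq T) al L t k' r, sG G -> sD D2 ->
  typc G D2 (ssub_c al L c) t -> le_C t (Times (Arr k' r) k') ->
  exists de, [/\ isD de, typ G D2 L de &
    forall D1, ctxOK D1 D2 al de -> exists k'', typc G D1 c (Times (Arr k'' r) k'')].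

Lemma ssx_mut : (forall M, PR M) /\ (forall c, PRc c).
Proof.
have cV : forall x, PR (Var x).
  move=> x G D2 al L t sg sd2 /= /gen_var h; exists Om; split => //; first exact: T_Om.
  move=> D1 _; exact: T_Sub (T_Ax _ _ _) (h sg).
have cL : forall M, PR M -> PR (Lam M).
  move=> M IH G D2 al L t sg sd2 /= h; remember (Lam (ssub al (ren_v S L) M)) as e eqn:E.
  induction h; try discriminate.
  - injection E => ?; subst.
    have [de [ide hL hall]] := IH _ _ _ _ _ (sG_cons H sg) sd2 h.
    exists de; split => //.
    + apply: (anti_v_typ hL) => //; first exact: sG_cons.
      move=> x /=; exact: leD_refl (sg x).
    + move=> D1 ok; exact: T_Abs H (hall D1 ok).
  - have [de [i l hh]] := rcomb sd2 (@monoD_typ G (Lam M) s sg) (@monoD_typ G (Lam M) t sg)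
      (IHh1 sg sd2 E) (IHh2 sg sd2 E).
    exists de; split => // D1 ok; have [a b] := hh D1 ok; exact: T_Meet.
  - exists Om; split => //; [exact: T_Om | move=> *; exact: T_Om].
  - have [de [i l hh]] := IHh sg sd2 E; exists de; split => // D1 ok; exact: T_Sub (hh D1 ok) H.
have cA : forall M, PR M -> forall N, PR N -> PR (App M N).
  move=> M IH1 N IH2 G D2 al L t sg sd2 /= h; remember (App (ssub al L M) (ssub al L N)) as e eqn:E.
  induction h; try discriminate.
  - injection E => ? ?; subst.
    have [de [i l hh]] := rcomb sd2 (@monoD_typ G M (Arr (Times dl k) r) sg) (@monoD_typ G N dl sg)
      (IH1 _ _ _ _ _ sg sd2 h1) (IH2 _ _ _ _ _ sg sd2 h2).
    exists de; split => // D1 ok; have [a b] := hh D1 ok; exact: T_App a b.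
  - have [de [i l hh]] := rcomb sd2 (@monoD_typ G (App M N) s sg) (@monoD_typ G (App M N) t sg)
      (IHh1 sg sd2 E) (IHh2 sg sd2 E).
    exists de; split => // D1 ok; have [a b] := hh D1 ok; exact: T_Meet.
  - exists Om; split => //; [exact: T_Om | move=> *; exact: T_Om].
  - have [de [i l hh]] := IHh sg sd2 E; exists de; split => // D1 ok; exact: T_Sub (hh D1 ok) H.
have cM : forall c, PRc c -> PR (Mu c).
  move=> c IH G D2 al L t sg sd2 /= h; remember (Mu (ssub_c al.+1 (ren_n S L) c)) as e eqn:E.
  induction h; try discriminate.
  - injection E => ?; subst.
    have ic := typc_sort H0 sg (sD_cons H sd2).
    have [de [ide hL hall]] := IH _ _ _ _ _ _ _ sg (sD_cons H sd2) H0 (leC_refl ic).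
    exists de; split => //.
    + apply: (anti_n_typ hL) => //; first exact: sD_cons.
      move=> a /=; exact: leC_refl (sd2 a).
    + move=> D1 ok; have [k'' hc] := hall _ (ctxOK_cons H ok); exact: T_Mu H hc.
  - have [de [i l hh]] := rcomb sd2 (@monoD_typ G (Mu c) s sg) (@monoD_typ G (Mu c) t sg)
      (IHh1 sg sd2 E) (IHh2 sg sd2 E).
    exists de; split => // D1 ok; have [a b] := hh D1 ok; exact: T_Meet.
  - exists Om; split => //; [exact: T_Om | move=> *; exact: T_Om].
  - have [de [i l hh]] := IHh sg sd2 E; exists de; split => // D1 ok; exact: T_Sub (hh D1 ok) H.
have cN : forall a M, PR M -> PRc (Named a M).
  move=> b P IH G D2 al L t k' r sg sd2 /= h hX.
  move: h; case: PeanoNat.Nat.eqb_spec => [eb|nb] h.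
  - subst b.
    have [d [hA hle]] := gen_cmd h sg sd2.
    have [/= hd1 tl1] := le_C_hdtl (leC_trans hle hX).
    have [_ /= /andP[ik' ir]] := le_D_sort hd1.
    have := PQ_le (@Qgood_App G D2 _ L sg sd2) hd1 (gen_app hA sg sd2).
    move=> /PQ_arr /(_ ik') [d0 [i0 [hX0 hL0]]].
    have [d1 [i1 hL1 hall]] := IH _ _ _ _ _ sg sd2 hX0.
    exists (Meet d0 d1); split; [by srt | exact: T_Meet |].
    move=> D1 ok.
    have hP := lift (@monoD_typ G P _ sg) i1 (leD_meetr i0 i1) sd2 hall ok.
    have [s1 e1 e2] := ok.
    exists (nth Om D1 al); apply: Tc_Sub; first (apply: T_Cmd; exact: hP).
    apply: leC_times_l; last exact: s1.
    apply: le_arr; last exact: (proj2 (le_R_norm ir)).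
    rewrite e1; apply: leC_trans (leC_times_l (leD_meetl i0 i1) (sd2 al)) _.
    exact: leC_times_r.
  - have [d [hA hle]] := gen_cmd h sg sd2.
    have [de [i l hall]] := IH _ _ _ _ _ sg sd2 hA.
    exists de; split => // D1 ok; have [s1 e1 e2] := ok.
    exists k'; apply: Tc_Sub; first (apply: T_Cmd; exact: hall D1 ok).
    rewrite (e2 _ nb); exact: leC_trans hle hX.
split; [exact: (@term_mut PR PRc cV cL cA cM cN) | exact: (@cmd_mut PR PRc cV cL cA cM cN)].
Qed.

Lemma beta_red G D M N t : typ G D (App (Lam M) N) t -> sG G -> sD D ->
  typ G D (beta_subst M N) t.
Proof.
move=> h sg sd; remember (App (Lam M) N) as e eqn:E; induction h; try discriminate.
- injection E => ? ?; subst.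
  have := typ_sort h1 sg sd => /= /andP[/andP[idl ik] ir].
  have := gen_lam h1 sg sd => /PQ_arr /= /(_ ltac:(by srt)) hM.
  apply: T_Sub (subst_typ hM (sG_cons idl sg) sd sg _) _.
  + case=> [|y] //=; exact: T_Ax.
  + apply: le_arr; [exact: leC_refl | exact: (proj2 (le_R_norm ir))].
- apply: T_Meet; useIH.
- exact: T_Om.
- apply: T_Sub H; useIH.
Qed.

Lemma beta_exp G D M N t : typ G D (beta_subst M N) t -> sG G -> sD D ->
  typ G D (App (Lam M) N) t.
Proof.
move=> h sg sd; have [Gs [sGs hs hM]] := subx_typ h sg sd.
have hN := hs 0.
have hM' : typ (nth Om Gs 0 :: G) D M t.
  apply: (mono hM) => //.
  + case=> [|y] /=; first exact: leD_refl (sGs 0).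
    have := hs y.+1 => /= /gen_var; apply; exact: sg.
  + move=> a; exact: leC_refl (sd a).
have it := typ_sort hM sGs sd.
apply (arrdec it); move=> k a hin.
have ik := nf_sort it hin.
apply: T_App hN.
apply: T_Abs (sGs 0) _; exact: T_Sub hM' (nf_proj it hin).
Qed.

Lemma ctxOK0 D de k : sD D -> isD de -> isC k -> ctxOK (Times de k :: D) (k :: D) 0 de.
Proof.
move=> sd ide ik; split => //; first (apply: sD_cons => //; by srt).
by case=> [|b].
Qed.

Lemma mu_red G D c N t : typ G D (App (Mu c) N) t -> sG G -> sD D ->
  typ G D (Mu (ssub_c 0 (ren_n S N) c)) t.
Proof.
move=> h sg sd; remember (App (Mu c) N) as e eqn:E; induction h; try discriminate.
- injection E => ? ?; subst.
  have := typ_sort h1 sg sd => /= /andP[/andP[idl ik] ir].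
  have idk : isC (Times dl k) by rewrite /= idl ik.
  have := gen_mu h1 sg sd => /PQ_arr /(_ idk) [k0 [ik0 hc]].
  have ic := typc_sort hc sg (sD_cons idk sd).
  have [k'' hc'] := ss_cmd sg (sD_cons ik sd) idl (ctxOK0 sd idl ik) (shift_n _ h2 sg sd) hc
     (leC_refl ic).
  apply: T_Sub (T_Mu ik hc') _.
  apply: le_arr; [exact: leC_refl | exact: (proj2 (le_R_norm ir))].
- apply: T_Meet; useIH.
- exact: T_Om.
- apply: T_Sub H; useIH.
Qed.

Lemma mu_exp G D c N t : typ G D (Mu (ssub_c 0 (ren_n S N) c)) t -> sG G -> sD D ->
  typ G D (App (Mu c) N) t.
Proof.
move=> h sg sd; have it := typ_sort h sg sd.
have hP := gen_mu h sg sd.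
apply (arrdec it); move=> k a hin.
have ik := nf_sort it hin.
have [k' [ik' hc]] := hP k a hin ik.
have ic := typc_sort hc sg (sD_cons ik sd).
have [de [ide hL hall]] := (proj2 ssx_mut) c G (k :: D) 0 (ren_n S N) _ k' (Psi a) sg
   (sD_cons ik sd) hc (leC_refl ic).
have hN : typ G D N de.
  apply: (anti_n_typ hL) => //; first exact: sD_cons.
  move=> b /=; exact: leC_refl (sd b).
have [k'' hc2] := hall _ (ctxOK0 sd ide ik).
apply: T_App hN; apply: (T_Mu _ hc2); by srt.
Qed.

Definition SRt M M' := forall G D t, sG G -> sD D -> typ G D M t -> typ G D M' t.
Definition SRc c c' := forall G D t k' r, sG G -> sD D -> typc G D c t ->
  le_C t (Times (Arr k' r) k') -> exists k'', typc G D c' (Times (Arr k'' r) k'').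

Lemma cong_lam M M' : SRt M M' -> SRt (Lam M) (Lam M').
Proof.
move=> IH G D t sg sd h; remember (Lam M) as e eqn:E; induction h; try discriminate.
- injection E => ?; subst; apply: T_Abs => //; apply: IH h => //; exact: sG_cons.
- apply: T_Meet; useIH.
- exact: T_Om.
- apply: T_Sub H; useIH.
Qed.

Lemma cong_app M M' N N' : SRt M M' -> SRt N N' -> SRt (App M N) (App M' N').
Proof.
move=> IH1 IH2 G D t sg sd h; remember (App M N) as e eqn:E; induction h; try discriminate.
- injection E => ? ?; subst; apply: T_App; [exact: IH1 h1 | exact: IH2 h2].
- apply: T_Meet; useIH.
- exact: T_Om.
- apply: T_Sub H; useIH.
Qed.

Lemma SRt_refl M : SRt M M.
Proof. by move=> G D t _ _. Qed.

Lemma cong_mu c c' : SRc c c' -> SRt (Mu c) (Mu c').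
Proof.
move=> IH G D t sg sd h; remember (Mu c) as e eqn:E; induction h; try discriminate.
- injection E => ?; subst.
  have ic := typc_sort H0 sg (sD_cons H sd).
  have [k'' h'] := IH _ _ _ _ _ sg (sD_cons H sd) H0 (leC_refl ic).
  exact: T_Mu H h'.
- apply: T_Meet; useIH.
- exact: T_Om.
- apply: T_Sub H; useIH.
Qed.

Lemma cong_named a M M' : SRt M M' -> SRc (Named a M) (Named a M').
Proof.
move=> IH G D t k' r sg sd h hX; have [d [hM hle]] := gen_cmd h sg sd.
exists k'; apply: Tc_Sub; first (apply: T_Cmd; exact: IH hM).
exact: leC_trans hle hX.
Qed.

Lemma ren_fwd a c : SRc (Named a (Mu c)) (name_subst a c).
Proof.
move=> G D t k' r sg sd h hX; have [d [hMu hle]] := gen_cmd h sg sd.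
have [/= hd1 tl1] := le_C_hdtl (leC_trans hle hX).
have [_ /= /andP[ik' ir]] := le_D_sort hd1.
have := PQ_le (@Qgood_Mu G D c sg sd) hd1 (gen_mu hMu sg sd).
move=> /PQ_arr /(_ ik') [k0 [ik0 hc]].
exists k0; rewrite /name_subst.
apply: Tc_Sub (ren_n_typc hc sg (sD_cons ik' sd) _) _.
- case=> [|b] //=; exact: leC_refl (sd b).
- apply: leC_times_l => //; apply: le_arr; [exact: leC_refl ik0 | exact: (proj2 (le_R_norm ir))].
Qed.

Lemma ren_bwd a c : SRc (name_subst a c) (Named a (Mu c)).
Proof.
move=> G D t k' r sg sd h hX; rewrite /name_subst in h.
have hc : typc G (nth Om D a :: D) c t.
  apply: (anti_n_typc h) => //; first exact: sD_cons.
  case=> [|b] /=; [exact: leC_refl | exact: leC_refl (sd b)].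
exists (nth Om D a); apply: T_Cmd; exact: T_Mu (sd a) (Tc_Sub hc hX).
Qed.

Lemma step_SR :
  (forall M M', step M M' -> SRt M M' /\ SRt M' M) /\
  (forall c c', step_c c c' -> SRc c c' /\ SRc c' c).
Proof.
split; [apply: (@step_mut (fun M M' _ => SRt M M' /\ SRt M' M) (fun c c' _ => SRc c c' /\ SRc c' c))
       | apply: (@step_c_mut (fun M M' _ => SRt M M' /\ SRt M' M) (fun c c' _ => SRc c c' /\ SRc c' c))].
all: clear.
all: try (move=> M N; split => G D t sg sd h; [exact: beta_red | exact: beta_exp]).
all: try (move=> c N; split => G D t sg sd h; [exact: mu_red | exact: mu_exp]).
all: try (move=> M M' _ [h1 h2]; split; exact: cong_lam).
all: try (move=> M M' N _ [h1 h2]; split; apply: cong_app => //; exact: SRt_refl).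
all: try (move=> M N N' _ [h1 h2]; split; apply: cong_app => //; exact: SRt_refl).
all: try (move=> c c' _ [h1 h2]; split; exact: cong_mu).
all: try (move=> a c; split; [exact: ren_fwd | exact: ren_bwd]).
all: try (move=> a M M' _ [h1 h2]; split; exact: cong_named).
Qed.

Lemma lm_eq_SR M N : lm_eq M N -> SRt M N /\ SRt N M.
Proof.
elim=> {M N}.
- move=> M N /(proj1 step_SR) //.
- move=> M; split; exact: SRt_refl.
- by move=> M N _ [h1 h2].
- move=> M N P _ [h1 h2] _ [h3 h4]; split => G D t sg sd h; [apply: h3 | apply: h2] => //;
    [apply: h1 | apply: h4] => //.
Qed.

End Proofs.

Lemma all_nth_isD {disp : Order.disp_t} {K : bJoinSemilatticeType disp} (G : seq (ty K)) :
  all isD G -> forall x, isD (nth Om G x).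
Proof. elim: G => [|g G IH] /= h [|x] //=; case/andP: h => // _ /IH; exact. Qed.
Lemma all_nth_isC {disp : Order.disp_t} {K : bJoinSemilatticeType disp} (G : seq (ty K)) :
  all isC G -> forall x, isC (nth Om G x).
Proof. elim: G => [|g G IH] /= h [|x] //=; case/andP: h => // _ /IH; exact. Qed.

Theorem theorem5p1 (disp : Order.disp_t) (K : bJoinSemilatticeType disp)
  (enc : K -> nat) (enc_inj : injective enc)
  (G D : seq (ty K)) (M N : term) (dl : ty K) :
  all isD G -> all isC D ->
  lm_eq M N -> typ G D M dl -> typ G D N dl.
Proof.
move=> aG aD hMN h.
exact: (proj1 (lm_eq_SR hMN)) G D dl (all_nth_isD aG) (all_nth_isC aD) h.
Qed.
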